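(* Let $q\ge8$ be even. The $\mathrm{Un}\Gamma$-lines (lines meeting the twisted cubic $\mathcal{C}$ in exactly one point and contained in no osculating plane) form one orbit under $G_q$, namely $\{\ell\varphi:\varphi\in G_q\}$ where $\ell$ is the line through $P_0=P(0,0,0,1)$ and $P(1,0,1,0)$. The subgroup of $G_q$ fixing any $\mathrm{Un}\Gamma$-line is trivial.
   Context: $\mathrm{PG}(3,q)$ has points $P(x_0,x_1,x_2,x_3)$; $\boldsymbol{\pi}(c_0,c_1,c_2,c_3)$ is the plane $c_0x_0+c_1x_1+c_2x_2+c_3x_3=0$. The twisted cubic is $\mathcal{C}=\{P(t^3,t^2,t,1):t\in\mathbb{F}_q\}\cup\{P(1,0,0,0)\}$; the osculating planes are $\boldsymbol{\pi}(1,-3t,3t^2,-t^3)$, $t\in\mathbb{F}_q$, and $\boldsymbol{\pi}(0,0,0,1)$. $G_q$ is the group of projectivities of $\mathrm{PG}(3,q)$ mapping $\mathcal{C}$ to itself. *)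

(* Defs.v *)
(* PG(3,q) modelled via row vectors 'rV[F]_4 over a finite field F
   (q = #|F|); points = 1-dim row spaces, lines = rank-2 matrices 'M_(2,4)
   (row space), projectivities = invertible 4x4 matrices acting on the right,
   identified up to nonzero scalars. *)
From HB Require Import structures.
From mathcomp Require Import all_boot all_order all_algebra all_fingroup all_field.
Set Implicit Arguments. Unset Strict Implicit. Unset Printing Implicit Defensive.
Import Order.TTheory GRing.Theory.
Local Open Scope ring_scope.

Section TwistedCubic.
Variable F : finFieldType.

Definition vec4 (a b c d : F) : 'rV[F]_4 :=
  \row_(j < 4) nth 0 [:: a; b; c; d] j.

Definition cpt (u : option F) : 'rV[F]_4 :=
  match u with
  | Some t => vec4 (t ^+ 3) (t ^+ 2) t 1
  | None => vec4 1 0 0 0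
  end.

(* coefficient vector of the osculating plane at the point with parameter u:
   pi(1,-3t,3t^2,-t^3) and pi(0,0,0,1) *)
Definition osc (u : option F) : 'rV[F]_4 :=
  match u with
  | Some t => vec4 1 (- (3%:R * t)) (3%:R * t ^+ 2) (- t ^+ 3)
  | None => vec4 0 0 0 1
  end.

Definition is_line (L : 'M[F]_(2, 4)) : bool := \rank L == 2%N.

Definition line_in_plane (L : 'M[F]_(2, 4)) (c : 'rV[F]_4) : bool :=
  L *m c^T == 0.

Definition UnGamma (L : 'M[F]_(2, 4)) : Prop :=
  [/\ is_line L,
      #|[set u : option F | (cpt u <= L)%MS]| = 1%N
    & forall u : option F, ~~ line_in_plane L (osc u)].

Definition inGq (A : 'M[F]_4) : Prop :=
  [/\ A \in unitmx,
      forall u : option F, exists u' : option F, (cpt u *m A == cpt u')%MS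
    & forall u' : option F, exists u : option F, (cpt u *m A == cpt u')%MS].

Definition ell0 : 'M[F]_(2, 4) :=
  \matrix_(i < 2, j < 4)
     nth 0 (nth [::] [:: [:: 0; 0; 0; 1]; [:: 1; 0; 1; 0]] i) j.

End TwistedCubic.

(* Main.v *)
Require Import Defs.
From HB Require Import structures.
From mathcomp Require Import all_boot all_order all_algebra all_fingroup all_field.
From mathcomp Require Import all_solvable.
From mathcomp Require Import ring.
Import GRing.Theory.
Local Open Scope ring_scope.
Set Implicit Arguments. Unset Strict Implicit.


Section S.
Variable F : finFieldType.
Definition i0 : 'I_4 := @Ordinal 4 0 isT.
Definition i1 : 'I_4 := @Ordinal 4 1 isT.
Definition i2 : 'I_4 := @Ordinal 4 2 isT.
Definition i3 : 'I_4 := @Ordinal 4 3 isT.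

Lemma mulmx4E m n (A : 'M[F]_(m,4)) (B : 'M[F]_(4,n)) i j :
  (A *m B) i j = A i i0 * B i0 j + A i i1 * B i1 j + A i i2 * B i2 j + A i i3 * B i3 j.
Proof.
rewrite mxE !big_ord_recl big_ord0 addr0 !addrA.
have -> : (lift ord0 (lift ord0 (lift ord0 ord0)) : 'I_4) = i3 by apply: val_inj.
have -> : (lift ord0 (lift ord0 ord0) : 'I_4) = i2 by apply: val_inj.
have -> : (lift ord0 ord0 : 'I_4) = i1 by apply: val_inj.
by have -> : (ord0 : 'I_4) = i0 by apply: val_inj.
Qed.

Lemma char2 (hqeven : ~~ odd #|F|) : (2%:R : F) = 0.
Proof.
have [p pp pc] := finPcharP F.
have := abelem_pgroup (fin_ring_pchar_abelem pc).
rewrite /pgroup cardsT => pn.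
have h2 : (2 %| #|F|)%N by rewrite dvdn2.
have := pnat_dvd h2 pn; rewrite pnatE // inE => /eqP e2.
by rewrite e2; apply: (pcharf0 pc).
Qed.

Definition mono (x y : F) : 'rV[F]_4 := vec4 (x^+3) (x^+2 * y) (x * y^+2) (y^+3).
Definition oscv (x y : F) : 'rV[F]_4 :=
  vec4 (y^+3) (- (3%:R * x * y^+2)) (3%:R * x^+2 * y) (- x^+3).
Definition Mg (a b c d : F) : 'M[F]_4 := \matrix_(i < 4, j < 4) nth 0 (nth [::] [::
  [:: a^+3; a^+2*c; a*c^+2; c^+3];
  [:: 3%:R*a^+2*b; a^+2*d + 2%:R*a*b*c; 2%:R*a*c*d + b*c^+2; 3%:R*c^+2*d];
  [:: 3%:R*a*b^+2; 2%:R*a*b*d + b^+2*c; a*d^+2 + 2%:R*b*c*d; 3%:R*c*d^+2];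
  [:: b^+3; b^+2*d; b*d^+2; d^+3]] i) j.

Ltac rv4 := apply/rowP; case => [[|[|[|[|?]]]] Hj] //;
  rewrite ?mulmx4E !mxE /=.
Ltac cv4 := apply/colP; case => [[|[|[|[|?]]]] Hj] //;
  rewrite ?mulmx4E !mxE /=.
Ltac m44 := apply/matrixP; case => [[|[|[|[|?]]]] Hi] //;
  case => [[|[|[|[|?]]]] Hj] //; rewrite ?mulmx4E !mxE /=.

Lemma mono_Mg x y a b c d :
  mono x y *m Mg a b c d = mono (a*x + b*y) (c*x + d*y).
Proof. rv4; rewrite ?mxE /=; ring. Qed.

Lemma Mg_mul a b c d a' b' c' d' :
  Mg a b c d *m Mg a' b' c' d' =
  Mg (a'*a + b'*c) (a'*b + b'*d) (c'*a + d'*c) (c'*b + d'*d).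
Proof. m44; rewrite ?mxE /=; ring. Qed.

Lemma Mg_scal k : Mg k 0 0 k = k^+3 *: 1%:M.
Proof. m44; rewrite ?mulr1 ?mulr0 //; ring. Qed.

Lemma Mg_osc a b c d x y :
  Mg a b c d *m (oscv x y)^T = (oscv (x*d - y*b) (y*a - x*c))^T.
Proof. cv4; rewrite ?mxE /=; ring. Qed.

Lemma ord4_cases (P : 'I_4 -> Prop) : P i0 -> P i1 -> P i2 -> P i3 -> forall i, P i.
Proof.
move=> h0 h1 h2 h3; case=> [[|[|[|[|?]]]] Hi] //.
- by rewrite (bool_irrelevance Hi isT).
- by rewrite (bool_irrelevance Hi isT).
- by rewrite (bool_irrelevance Hi isT).
- by rewrite (bool_irrelevance Hi isT).
Qed.

Lemma poly7 (c0 c1 c2 c3 c4 c5 c6 : F) : (7 <= #|F|)%N ->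
  (forall t : F, c0 + c1 * t + c2 * t^+2 + c3 * t^+3 + c4 * t^+4 + c5 * t^+5 + c6 * t^+6 = 0) ->
  c0 = 0 /\ c1 = 0 /\ c2 = 0 /\ c3 = 0 /\ c4 = 0 /\ c5 = 0 /\ c6 = 0.
Proof.
move=> hF h.
pose p := Poly [:: c0; c1; c2; c3; c4; c5; c6].
have p0 : p = 0.
  apply: (@roots_geq_poly_eq0 _ p (enum F)).
  - apply/allP => t _; rewrite /root /p horner_Poly /=; apply/eqP; rewrite -[RHS](h t); ring.
  - exact: enum_uniq.
  - by rewrite -cardE (leq_trans (size_Poly _)).
have hc i : (Poly [:: c0; c1; c2; c3; c4; c5; c6])`_i = 0 by rewrite -/p p0 coef0.
by do ![split]; [move: (hc 0%N) | move: (hc 1%N) | move: (hc 2%N) | move: (hc 3%N) | move: (hc 4%N) | move: (hc 5%N) | move: (hc 6%N)]; rewrite coef_Poly.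
Qed.
End S.


Ltac rv4 := apply/rowP; case => [[|[|[|[|?]]]] Hj] //;
  rewrite ?mulmx4E !mxE /=.
Ltac cv4 := apply/colP; case => [[|[|[|[|?]]]] Hj] //;
  rewrite ?mulmx4E !mxE /=.

Section S2.
Variable F : finFieldType.
Implicit Types (x y a b c d t k : F).

Definition hc (u : option F) : F * F := if u is Some t then (t, 1) else (1, 0).
Definition pt x y : option F := if y == 0 then None else Some (x / y).

Lemma cpt_mono u : cpt u = mono (hc u).1 (hc u).2.
Proof. by case: u => [t|]; rv4; ring. Qed.

Lemma osc_oscv u : osc u = (if u is Some _ then 1 else -1) *: oscv (hc u).1 (hc u).2.
Proof. by case: u => [t|]; rv4; ring. Qed.

Lemma hc_nz u : ((hc u).1 != 0) || ((hc u).2 != 0).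
Proof. by case: u => [t|] /=; rewrite oner_neq0 ?orbT. Qed.

Lemma mono_pt x y : (x != 0) || (y != 0) ->
  exists2 k, k != 0 & mono x y = k *: cpt (pt x y).
Proof.
rewrite /pt; case: (eqVneq y 0) => [->|y0] h /=.
  rewrite orbF in h.
  by exists (x^+3); [rewrite expf_neq0 | rv4; ring].
by exists (y^+3); [rewrite expf_neq0 | rv4; field].
Qed.

Lemma oscv_pt x y : (x != 0) || (y != 0) ->
  exists2 k, k != 0 & oscv x y = k *: osc (pt x y).
Proof.
rewrite /pt; case: (eqVneq y 0) => [->|y0] h /=.
  rewrite orbF in h.
  by exists (- x^+3); [rewrite oppr_eq0 expf_neq0 | rv4; ring].
by exists (y^+3); [rewrite expf_neq0 | rv4; field].
Qed.

Lemma mono_scale k x y : mono (k*x) (k*y) = k^+3 *: mono x y.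
Proof. rv4; ring. Qed.

Lemma cpt_inj (u v : option F) : (cpt u <= cpt v)%MS -> u = v.
Proof.
case/sub_rVP => k e.
have e3 := congr1 (fun w : 'rV_4 => w 0 i3) e.
have e2 := congr1 (fun w : 'rV_4 => w 0 i2) e.
have e0 := congr1 (fun w : 'rV_4 => w 0 i0) e.
move: e3 e2 e0 {e}; case: u => [s|]; case: v => [t|]; rewrite !mxE /=.
- move=> h3 h2 _; have k1 : k = 1 by rewrite h3; ring.
  by rewrite h2 k1 mul1r.
- move=> h3; exfalso; have := @oner_neq0 F; by rewrite h3 mulr0 eqxx.
- move=> h3 _ h0; have : (1 : F) = 0.
    by rewrite h0 (_ : k = 0) ?mul0r // h3 mulr1.
  by move/eqP; rewrite oner_eq0.
- by [].
Qed.

Lemma unit_nz (A : 'M[F]_4) (v : 'rV_4) : A \in unitmx -> v *m A = 0 -> v = 0.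
Proof. by move=> Au e; rewrite -(mulmxK Au v) e mul0mx. Qed.

Lemma unit_nzc (A : 'M[F]_4) (w : 'cV_4) : A \in unitmx -> A *m w = 0 -> w = 0.
Proof. by move=> Au e; rewrite -(mulKmx Au w) e mulmx0. Qed.

Lemma Mg_inv a b c d : Mg a b c d *m Mg d (-b) (-c) a = (a*d - b*c)^+3 *: 1%:M.
Proof. rewrite Mg_mul -Mg_scal; congr Mg; ring. Qed.

Lemma Mg_inv' a b c d : Mg d (-b) (-c) a *m Mg a b c d = (a*d - b*c)^+3 *: 1%:M.
Proof. rewrite Mg_mul -Mg_scal; congr Mg; ring. Qed.

Lemma Mg_unit a b c d : a*d - b*c != 0 -> Mg a b c d \in unitmx.
Proof.
move=> h.
have [] := @mulmx1_unit _ _ (Mg a b c d) (((a*d - b*c)^+3)^-1 *: Mg d (-b) (-c) a) => //.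
by rewrite -scalemxAr Mg_inv scalerA mulVf ?scale1r // expf_neq0.
Qed.

Lemma lin_nz a b c d x y : a*d - b*c != 0 -> (x != 0) || (y != 0) ->
  (a*x + b*y != 0) || (c*x + d*y != 0).
Proof.
move=> hD hxy; apply: contraT; rewrite negb_or => /andP [/negPn/eqP e1 /negPn/eqP e2].
have ex : (a*d - b*c) * x = 0.
  have -> : (a*d - b*c) * x = d * (a*x+b*y) - b * (c*x+d*y) by ring.
  by rewrite e1 e2; ring.
have ey : (a*d - b*c) * y = 0.
  have -> : (a*d - b*c) * y = a * (c*x+d*y) - c * (a*x+b*y) by ring.
  by rewrite e1 e2; ring.
move: ex ey => /eqP; rewrite mulf_eq0 (negbTE hD) /= => /eqP x0 /eqP.
by rewrite mulf_eq0 (negbTE hD) /= => /eqP y0; move: hxy; rewrite x0 y0 eqxx.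
Qed.

Lemma eq_scaled (v w : 'rV[F]_4) k : k != 0 -> v = k *: w -> (v == w)%MS.
Proof. by move=> k0 ->; apply/eqmxP; apply: eqmx_scale. Qed.

Lemma Mg_inGq a b c d : a*d - b*c != 0 -> inGq (Mg a b c d).
Proof.
move=> hD; split; first exact: Mg_unit.
- move=> u; exists (pt (a*(hc u).1 + b*(hc u).2) (c*(hc u).1 + d*(hc u).2)).
  have [k k0 e] := mono_pt (lin_nz hD (hc_nz u)).
  by apply: (eq_scaled k0); rewrite cpt_mono mono_Mg.
- move=> u'; set x := (hc u').1; set y := (hc u').2.
  have hD' : d * a - (-b) * (-c) != 0 by rewrite (_ : d * a - (-b) * (-c) = a*d - b*c) //; ring.
  have := lin_nz hD' (hc_nz u'); rewrite -/x -/y => nz.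
  exists (pt (d*x + -b*y) (-c*x + a*y)).
  have [k k0 e] := mono_pt nz.
  have k1 : k^-1 * (a*d - b*c)^+3 != 0 by rewrite mulf_neq0 ?invr_eq0 ?expf_neq0.
  apply: (eq_scaled k1).
  have -> : cpt (pt (d*x + -b*y) (-c*x + a*y)) = k^-1 *: mono (d*x + -b*y) (-c*x + a*y).
    by rewrite e scalerA mulVf // scale1r.
  rewrite -scalemxAl mono_Mg.
  have -> : a*(d*x + -b*y) + b*(-c*x + a*y) = (a*d - b*c) * x by ring.
  have -> : c*(d*x + -b*y) + d*(-c*x + a*y) = (a*d - b*c) * y by ring.
  by rewrite mono_scale cpt_mono scalerA.
Qed.

End S2.


Section S3.
Variable F : finFieldType.
Implicit Types (x y a b c d t k : F).

Lemma rowSome (B : 'M[F]_4) t j :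
  (cpt (Some t) *m B) 0 j = t^+3 * B i0 j + t^+2 * B i1 j + t * B i2 j + B i3 j.
Proof. rewrite mulmx4E !mxE /=; ring. Qed.

Lemma rowNone (B : 'M[F]_4) j : (cpt None *m B) 0 j = B i0 j.
Proof. by rewrite mulmx4E !mxE /=; ring. Qed.

Lemma cpt_neq0 (u : option F) : cpt u != 0.
Proof.
apply/eqP; case: u => [t|] e.
  have := congr1 (fun w : 'rV_4 => w 0 i3) e; rewrite !mxE /= => /eqP.
  by rewrite oner_eq0.
have := congr1 (fun w : 'rV_4 => w 0 i0) e; rewrite !mxE /= => /eqP.
by rewrite oner_eq0.
Qed.


Lemma unit_inj (A : 'M[F]_4) (v w : 'rV_4) : A \in unitmx -> v *m A = w *m A -> v = w.
Proof. by move=> Au e; rewrite -(mulmxK Au v) e mulmxK. Qed.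

Lemma inGq_sc (A : 'M[F]_4) : inGq A -> forall u : option F,
  exists u', exists2 k, k != 0 & cpt u *m A = k *: cpt u'.
Proof.
case=> Au fwd _ u; have [u' /andP [s1 _]] := fwd u.
case/sub_rVP: s1 => k ek; exists u', k => //.
apply/eqP => k0; move: ek; rewrite k0 scale0r => /(unit_nz Au) e.
by move: (cpt_neq0 u); rewrite e eqxx.
Qed.

Lemma quad (v : 'rV[F]_4) k x y : v = k *: mono x y ->
  v 0 i1 ^+ 2 - v 0 i0 * v 0 i2 = 0 /\ v 0 i2 ^+ 2 - v 0 i1 * v 0 i3 = 0.
Proof. by move=> ->; rewrite !mxE /=; split; ring. Qed.

Lemma hc_det (u v : option F) : u != v ->
  (hc v).2 * - (hc u).1 - - (hc v).1 * (hc u).2 != 0.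
Proof.
move: u v => [r|] [s|] //= neq.
- have -> : 1 * - r - - s * 1 = s - r by ring.
  by rewrite subr_eq0 eq_sym; apply: contra neq => /eqP ->.
- have -> : 0 * - r - - 1 * 1 = 1 :> F by ring.
  exact: oner_neq0.
- have -> : 1 * - 1 - - s * 0 = - 1 :> F by ring.
  by rewrite oppr_eq0 oner_neq0.
Qed.

Lemma inGq_Mg (A : 'M[F]_4) : (7 <= #|F|)%N -> inGq A ->
  exists a b c d k, [/\ a*d - b*c != 0, k != 0 & A = k *: Mg a b c d].
Proof.
move=> hF hA; have sc := inGq_sc hA; case: hA => Au _ _.
have [ui [k1 k10 e1]] := sc None.
have [u0 [k2 k20 e2]] := sc (Some 0).
have neq : ui != u0.
  apply/eqP => eq; subst u0.
  have : cpt None = (k1 / k2) *: cpt (Some 0).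
    apply: (unit_inj Au); rewrite -scalemxAl e1 e2 scalerA divfK //.
  by move=> ee; have := @cpt_inj F None (Some 0); rewrite ee scalemx_sub // => /(_ isT).
pose a := (hc u0).2; pose b := - (hc u0).1; pose c := (hc ui).2; pose d := - (hc ui).1.
have hD : a * d - b * c != 0.
  exact: hc_det.
have [B Bdef] : {B | B = A *m Mg a b c d} by exists (A *m Mg a b c d).
have Bu : B \in unitmx by rewrite Bdef unitmx_mul Au Mg_unit.
have eB u u' k : cpt u *m A = k *: cpt u' ->
    cpt u *m B = k *: mono (a*(hc u').1 + b*(hc u').2) (c*(hc u').1 + d*(hc u').2).
  by move=> e; rewrite Bdef mulmxA e -scalemxAl cpt_mono mono_Mg.
have z0 j : j != i0 -> B i0 j = 0.
  move=> hj; rewrite -rowNone (eB _ _ _ e1) !mxE.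
  have -> : c * (hc ui).1 + d * (hc ui).2 = 0 by rewrite /c /d; ring.
  by move: hj; apply: (@ord4_cases (fun j => j != i0 -> _)) => //= _; ring.
have z3 j : j != i3 -> B i3 j = 0.
  move=> hj; have := rowSome B 0 j; rewrite (eB _ _ _ e2) !mxE.
  have -> : a * (hc u0).1 + b * (hc u0).2 = 0 by rewrite /a /b; ring.
  have -> : 0 ^+ 3 * B i0 j + 0 ^+ 2 * B i1 j + 0 * B i2 j + B i3 j = B i3 j by ring.
  by move: hj; apply: (@ord4_cases (fun j => j != i3 -> _ = _ -> _)) => //= _ <-; ring.
have z01 := z0 i1 erefl; have z02 := z0 i2 erefl; have z03 := z0 i3 erefl.
have z30 := z3 i0 erefl; have z31 := z3 i1 erefl; have z32 := z3 i2 erefl.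
have Qt t : ((cpt (Some t) *m B) 0 i1 ^+ 2 - (cpt (Some t) *m B) 0 i0 * (cpt (Some t) *m B) 0 i2 = 0)
   /\ ((cpt (Some t) *m B) 0 i2 ^+ 2 - (cpt (Some t) *m B) 0 i1 * (cpt (Some t) *m B) 0 i3 = 0).
  by have [ut [kt _ et]] := sc (Some t); apply: quad (eB _ _ _ et).
have [_ [_ [q12 [q13 [q14 [q15 _]]]]]] := @poly7 F 0 0
  (B i2 i1 ^+2 - B i2 i0 * B i2 i2)
  (2%:R * B i1 i1 * B i2 i1 - B i1 i0 * B i2 i2 - B i2 i0 * B i1 i2)
  (B i1 i1 ^+2 - B i0 i0 * B i2 i2 - B i1 i0 * B i1 i2)
  (- (B i0 i0 * B i1 i2)) 0 hF
  (fun t => ltac:(have [h _] := Qt t; rewrite !rowSome ?z01 ?z02 ?z03 ?z30 ?z31 ?z32 in h;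
                  rewrite -[RHS]h; ring)).
have [_ [q21 [q22 [q23 [q24 _]]]]] := @poly7 F 0
  (- (B i2 i1 * B i3 i3))
  (B i2 i2 ^+2 - B i1 i1 * B i3 i3 - B i2 i1 * B i2 i3)
  (2%:R * B i1 i2 * B i2 i2 - B i1 i1 * B i2 i3 - B i2 i1 * B i1 i3)
  (B i1 i2 ^+2 - B i1 i1 * B i1 i3) 0 0 hF
  (fun t => ltac:(have [_ h] := Qt t; rewrite !rowSome ?z01 ?z02 ?z03 ?z30 ?z31 ?z32 in h;
                  rewrite -[RHS]h; ring)).
have hl : B i0 i0 != 0.
  apply/eqP => l0; have e0 : cpt None *m B = 0.
    by apply/rowP; apply: ord4_cases; rewrite rowNone mxE ?l0 ?z01 ?z02 ?z03.
  by move: (cpt_neq0 (@None F)); rewrite (unit_nz Bu e0) eqxx.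
have hm : B i3 i3 != 0.
  apply/eqP => m0; have e0 : cpt (Some 0) *m B = 0.
    by apply/rowP; apply: ord4_cases; rewrite rowSome mxE ?m0 ?z30 ?z31 ?z32; ring.
  by move: (cpt_neq0 (Some (0:F))); rewrite (unit_nz Bu e0) eqxx.
have hp2 : B i1 i2 = 0.
  by move/eqP: q15; rewrite oppr_eq0 mulf_eq0 (negbTE hl) => /eqP.
have hr1 : B i2 i1 = 0.
  by move/eqP: q21; rewrite oppr_eq0 mulf_eq0 (negbTE hm) orbF => /eqP.
have h13 : B i1 i1 * B i1 i3 = 0.
  by apply: oppr_inj; rewrite oppr0 -[RHS]q24 hp2; ring.
have h1r3 : B i1 i1 * B i2 i3 = 0.
  by apply: oppr_inj; rewrite oppr0 -[RHS]q23 hp2 hr1; ring.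
have hr2sq : B i2 i2 ^+ 2 = B i1 i1 * B i3 i3.
  by apply/eqP; rewrite -subr_eq0; apply/eqP; rewrite -[RHS]q22 hr1; ring.
have hp1sq : B i1 i1 ^+ 2 = B i0 i0 * B i2 i2.
  by apply/eqP; rewrite -subr_eq0; apply/eqP; rewrite -[RHS]q14 hp2; ring.
have h0r2 : B i1 i0 * B i2 i2 = 0.
  by apply: oppr_inj; rewrite oppr0 -[RHS]q13 hp2 hr1; ring.
have hr0r2 : B i2 i0 * B i2 i2 = 0.
  by apply: oppr_inj; rewrite oppr0 -[RHS]q12 hr1; ring.
have hp1 : B i1 i1 != 0.
  apply/eqP => p10.
  have r20 : B i2 i2 = 0.
    by move: hr2sq; rewrite p10 mul0r => /eqP; rewrite expf_eq0 /= => /eqP.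
  have ec : B *m (vec4 0 1 0 0)^T = 0.
    by apply/colP; apply: ord4_cases; rewrite mulmx4E !mxE /= ?z01 ?p10 ?hr1 ?z31; ring.
  have := congr1 (fun w : 'cV_4 => w i1 0) (unit_nzc Bu ec); rewrite !mxE /= => /eqP.
  by rewrite oner_eq0.
have hr2 : B i2 i2 != 0.
  apply/eqP => r20; move: hp1sq; rewrite r20 mulr0 => /eqP; rewrite expf_eq0 /=.
  by rewrite (negbTE hp1).
have hr0 : B i2 i0 = 0.
  by move/eqP: hr0r2; rewrite mulf_eq0 (negbTE hr2) orbF => /eqP.
have hp0 : B i1 i0 = 0.
  by move/eqP: h0r2; rewrite mulf_eq0 (negbTE hr2) orbF => /eqP.
have hp3 : B i1 i3 = 0.
  by move/eqP: h13; rewrite mulf_eq0 (negbTE hp1) /= => /eqP.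
have hr3 : B i2 i3 = 0.
  by move/eqP: h1r3; rewrite mulf_eq0 (negbTE hp1) /= => /eqP.
have er2 : B i2 i2 = B i1 i1 ^+ 2 / B i0 i0.
  by rewrite hp1sq; field.
have em : B i3 i3 = B i2 i2 ^+ 2 / B i1 i1.
  by rewrite hr2sq; field.
have hB : B = B i0 i0 *: Mg 1 0 0 (B i1 i1 / B i0 i0).
  apply/matrixP; apply: ord4_cases; apply: ord4_cases;
    rewrite !mxE /= ?z01 ?z02 ?z03 ?z30 ?z31 ?z32 ?hp0 ?hp2 ?hp3 ?hr0 ?hr1 ?hr3; try ring.
  - by field.
  - by rewrite er2; field.
  - by rewrite em er2; field; rewrite hl hp1.
have eA : B *m Mg d (-b) (-c) a = (a*d - b*c)^+3 *: A.
  by rewrite Bdef -mulmxA Mg_inv -scalemxAr mulmx1.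
exists (d*1 + -b*0), (d*0 + -b*(B i1 i1 / B i0 i0)), (-c*1 + a*0),
  (-c*0 + a*(B i1 i1 / B i0 i0)), (((a*d - b*c)^+3)^-1 * B i0 i0).
split.
- have -> : (d*1 + -b*0) * (-c*0 + a*(B i1 i1 / B i0 i0)) -
     (d*0 + -b*(B i1 i1 / B i0 i0)) * (-c*1 + a*0) = (B i1 i1 / B i0 i0) * (a*d - b*c) by ring.
  by rewrite mulf_neq0 // mulf_neq0 // invr_eq0.
- by rewrite mulf_neq0 // invr_eq0 expf_neq0.
- rewrite -Mg_mul -scalerA scalemxAl -hB eA scalerA mulVf ?scale1r //.
  by rewrite expf_neq0.
Qed.

End S3.


Ltac rv4' := apply/rowP; apply: ord4_cases; rewrite ?mulmx4E !mxE /=.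

Section S4.
Variable F : finFieldType.
Implicit Types (x y a b c d t k : F).

Definition mk2 n (r0 r1 : 'rV[F]_n) : 'M[F]_(2, n) :=
  \matrix_(i < 2, j < n) (if (i : nat) == 0%N then r0 0 j else r1 0 j).

Lemma mk2_row0 n (r0 r1 : 'rV[F]_n) : row 0 (mk2 r0 r1) = r0.
Proof. by apply/rowP => j; rewrite !mxE. Qed.
Lemma mk2_row1 n (r0 r1 : 'rV[F]_n) : row 1 (mk2 r0 r1) = r1.
Proof. by apply/rowP => j; rewrite !mxE. Qed.

Lemma mk2E0 n (r0 r1 : 'rV[F]_n) j : mk2 r0 r1 0 j = r0 0 j.
Proof. by rewrite mxE. Qed.
Lemma mk2E1 n (r0 r1 : 'rV[F]_n) j : mk2 r0 r1 1 j = r1 0 j.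
Proof. by rewrite mxE. Qed.

Lemma mk2_sub n m (r0 r1 : 'rV[F]_n) (L : 'M_(m, n)) :
  (mk2 r0 r1 <= L)%MS = (r0 <= L)%MS && (r1 <= L)%MS.
Proof.
apply/row_subP/andP => [h | [h0 h1] i].
  by split; [rewrite -(mk2_row0 r0 r1) | rewrite -(mk2_row1 r0 r1)]; apply: h.
case: i => [[|[|?]] Hi] //.
  by rewrite (_ : Ordinal Hi = 0) ?mk2_row0 //; apply: val_inj.
by rewrite (_ : Ordinal Hi = 1) ?mk2_row1 //; apply: val_inj.
Qed.

Lemma mk2_mul n p (r0 r1 : 'rV[F]_n) (M : 'M_(n, p)) :
  mk2 r0 r1 *m M = mk2 (r0 *m M) (r1 *m M).
Proof.
apply/row_matrixP; case => [[|[|?]] Hi] //; rewrite row_mul.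
  by rewrite (_ : Ordinal Hi = 0) ?mk2_row0 //; apply: val_inj.
by rewrite (_ : Ordinal Hi = 1) ?mk2_row1 //; apply: val_inj.
Qed.

Lemma mk2_00 n : mk2 (0 : 'rV[F]_n) 0 = 0.
Proof. by apply/matrixP => i j; rewrite !mxE; case: ifP. Qed.

Lemma sub_mk2 n m (r0 r1 : 'rV[F]_n) (L : 'M_(m, n)) (C : 'M_(n, 1)) :
  (L <= mk2 r0 r1)%MS -> r0 *m C = 0 -> r1 *m C = 0 -> L *m C = 0.
Proof.
by case/submxP => D -> e0 e1; rewrite -mulmxA mk2_mul e0 e1 mk2_00 mulmx0.
Qed.

Lemma rank2T (W : 'M[F]_(2, 4)) (T : 'M_(4, 2)) : W *m T = 1%:M -> \rank W = 2.
Proof.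
move=> e; apply/eqP; change (row_free W); apply/row_freeP; by exists T.
Qed.

Lemma mulmx2E m n (A : 'M[F]_(m,2)) (B : 'M[F]_(2,n)) i j :
  (A *m B) i j = A i 0 * B 0 j + A i 1 * B 1 j.
Proof.
rewrite mxE !big_ord_recl big_ord0 addr0.
have -> : (lift ord0 ord0 : 'I_2) = 1 by apply: val_inj.
by have -> : (ord0 : 'I_2) = 0 by apply: val_inj.
Qed.

Definition e1010 : 'rV[F]_4 := vec4 1 0 1 0.

Lemma ell0E : ell0 F = mk2 (cpt (Some 0)) e1010.
Proof.
apply/matrixP => i j; rewrite !mxE.
by case: i => [[|[|?]] Hi] //=; case: j => [[|[|[|[|?]]]] Hj] //=; rewrite ?mxE /= ?expr0n.
Qed.

Lemma rank_ell0 : \rank (ell0 F) = 2.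
Proof.
apply: (rank2T (T := \matrix_(r < 4, c < 2)
   nth 0 (nth [::] [:: [:: 0; 1]; [:: 0; 0]; [:: 0; 0]; [:: 1; 0]] r) c)).
apply/matrixP => i j; rewrite ell0E mulmx4E !mxE.
case: i => [[|[|?]] Hi] //=; case: j => [[|[|?]] Hj] //=; rewrite ?mxE /= ?expr0n /=; ring.
Qed.


Lemma rank_e3v (v : 'rV[F]_4) : v 0 i3 = 0 -> v != 0 -> \rank (mk2 (cpt (Some 0)) v) = 2.
Proof.
move=> v3 vnz.
have [j hj] : exists j, v 0 j != 0.
  apply/existsP; apply: contraNT vnz => /existsPn h; apply/eqP/rowP => j.
  by rewrite mxE; move/negPn/eqP: (h j).
move: j hj; apply: ord4_cases => hj.
- apply: (rank2T (T := \matrix_(r < 4, c < 2)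
   nth 0 (nth [::] [:: [:: 0; (v 0 i0)^-1]; [:: 0; 0]; [:: 0; 0]; [:: 1; 0]] r) c)).
  apply/matrixP => i j; rewrite mulmx4E !mxE.
  by case: i => [[|[|?]] Hi] //=; case: j => [[|[|?]] Hj] //=; rewrite ?mxE /= ?expr0n /= ?v3;
    field.
- apply: (rank2T (T := \matrix_(r < 4, c < 2)
   nth 0 (nth [::] [:: [:: 0; 0]; [:: 0; (v 0 i1)^-1]; [:: 0; 0]; [:: 1; 0]] r) c)).
  apply/matrixP => i j; rewrite mulmx4E !mxE.
  by case: i => [[|[|?]] Hi] //=; case: j => [[|[|?]] Hj] //=; rewrite ?mxE /= ?expr0n /= ?v3;
    field.
- apply: (rank2T (T := \matrix_(r < 4, c < 2)
   nth 0 (nth [::] [:: [:: 0; 0]; [:: 0; 0]; [:: 0; (v 0 i2)^-1]; [:: 1; 0]] r) c)).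
  apply/matrixP => i j; rewrite mulmx4E !mxE.
  by case: i => [[|[|?]] Hi] //=; case: j => [[|[|?]] Hj] //=; rewrite ?mxE /= ?expr0n /= ?v3;
    field.
- by rewrite v3 eqxx in hj.
Qed.

Lemma sub_ell0 (w : 'rV[F]_4) : (w <= ell0 F)%MS -> w 0 i1 = 0 /\ w 0 i0 = w 0 i2.
Proof.
case/submxP => D ->; rewrite !mulmx2E !mxE /=; split; ring.
Qed.

Lemma ell0_nosc (u : option F) : ~~ line_in_plane (ell0 F) (osc u).
Proof.
apply/negP => /eqP e.
have h0 := congr1 (fun M : 'M_(2,1) => M 0 0) e.
have h1 := congr1 (fun M : 'M_(2,1) => M 1 0) e.
move: h0 h1; rewrite ell0E mk2_mul ?mk2E0 ?mk2E1 !mulmx4E !mxE /=.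
case: u {e} => [t|] /=; rewrite !mxE /=.
- move=> h0 h1; have t0 : t = 0.
    have : t ^+ 3 = 0 by apply: oppr_inj; rewrite oppr0 -[RHS]h0; ring.
    by move/eqP; rewrite expf_eq0 /= => /eqP.
  move: h1; rewrite t0 => /eqP; rewrite (_ : _ + _ = 1) ?oner_eq0 //; ring.
- move=> /eqP; rewrite (_ : _ + _ = 1) ?oner_eq0 //; ring.
Qed.

Lemma lip_sub (L L' : 'M[F]_(2, 4)) (c : 'rV[F]_4) : (L' <= L)%MS -> line_in_plane L c -> line_in_plane L' c.
Proof. by case/submxP => D -> /eqP h; rewrite /line_in_plane -mulmxA h mulmx0. Qed.

Lemma UnGamma_eqmx (L L' : 'M[F]_(2, 4)) : (L == L')%MS -> UnGamma L -> UnGamma L'.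
Proof.
move=> h [rk cd os]; have /andP [s1 s2] := h; split.
- by rewrite /is_line -(eqmx_rank h).
- by rewrite -[RHS]cd; apply: eq_card => u; rewrite !inE (eqmxP h).
- by move=> u; apply: contra (os u); apply: lip_sub.
Qed.

Lemma Mg_osc' a b c d : a*d - b*c != 0 -> forall u : option F,
  exists u', exists2 k, k != 0 & Mg a b c d *m (osc u)^T = k *: (osc u')^T.
Proof.
move=> hD u; rewrite osc_oscv linearZ /= -scalemxAr Mg_osc.
have hD' : d * a - (-b) * (-c) != 0 by rewrite (_ : d * a - (-b) * (-c) = a*d - b*c) //; ring.
have := lin_nz hD' (hc_nz u).
rewrite (_ : d * (hc u).1 + - b * (hc u).2 = (hc u).1 * d - (hc u).2 * b); last by ring.
rewrite (_ : - c * (hc u).1 + a * (hc u).2 = (hc u).2 * a - (hc u).1 * c); last by ring.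
move=> nz; have [k k0 ->] := oscv_pt nz.
exists (pt ((hc u).1 * d - (hc u).2 * b) ((hc u).2 * a - (hc u).1 * c)).
exists ((if u is Some _ then 1 else -1) * k); last by rewrite linearZ /= scalerA.
by rewrite mulf_neq0 //; case: u {nz} => [?|] /=; rewrite ?oppr_eq0 oner_neq0.
Qed.


Lemma UnGamma_Mg a b c d (L : 'M[F]_(2, 4)) : a*d - b*c != 0 -> UnGamma L -> UnGamma (L *m Mg a b c d).
Proof.
move=> hD [rk cd os].
have Mfree : row_free (Mg a b c d) by rewrite row_free_unit Mg_unit.
pose f (u : option F) := pt (a*(hc u).1 + b*(hc u).2) (c*(hc u).1 + d*(hc u).2).
have hf u : (cpt u *m Mg a b c d == cpt (f u))%MS.
  have [k k0 e] := mono_pt (lin_nz hD (hc_nz u)).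
  by apply: (eq_scaled k0); rewrite cpt_mono mono_Mg.
have finj : injective f.
  move=> u v e; apply: cpt_inj; rewrite -(submxMfree _ _ Mfree).
  by rewrite (eqmxP (hf u)) e -(eqmxP (hf v)) submx_refl.
have [g fK gK] := injF_bij finj.
split.
- by rewrite /is_line mxrankMfree.
- rewrite -[RHS]cd -[RHS](card_imset _ finj); apply: eq_card => u'.
  rewrite !inE -(gK u') mem_imset // inE.
  by rewrite -[RHS](submxMfree _ _ Mfree) (eqmxP (hf (g u'))).
- move=> u; have [u' [k k0 e]] := Mg_osc' hD u.
  apply: contra (os u'); rewrite /line_in_plane -mulmxA e -scalemxAr scalemx_eq0.
  by rewrite (negbTE k0).
Qed.
End S4.



Section S5.
Variable F : finFieldType.
Implicit Types (x y a b c d t k : F).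

Lemma UnGamma_ell0 : UnGamma (ell0 F).
Proof.
split; first by rewrite /is_line rank_ell0.
- apply/eqP/cards1P; exists (Some 0); apply/setP => u; rewrite !inE.
  apply/idP/eqP => [/sub_ell0 [] | ->].
    case: u => [t|]; rewrite !mxE /=.
    + move=> /eqP; rewrite expf_eq0 /= => /eqP t0 _; by rewrite t0.
    + by move=> _ /eqP; rewrite oner_eq0.
  by rewrite ell0E -{1}(mk2_row0 (cpt (Some (0:F))) (e1010 F)) row_sub.
- exact: ell0_nosc.
Qed.

Lemma partA (A : 'M[F]_4) (L : 'M[F]_(2,4)) : (7 <= #|F|)%N -> inGq A ->
  (L == ell0 F *m A)%MS -> UnGamma L.
Proof.
move=> hF hA h; have [a [b [c [d [k [hD k0 eA]]]]]] := inGq_Mg hF hA; rewrite eA in h.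
apply: (UnGamma_eqmx _ (UnGamma_Mg hD UnGamma_ell0)).
apply/eqmxP; apply: eqmx_sym; apply: eqmx_trans (eqmxP h) _.
by rewrite -scalemxAr; apply: eqmx_scale.
Qed.

Lemma sqrt2 : (2%:R : F) = 0 -> forall z : F, exists d, d ^+ 2 = z.
Proof.
move=> h2 z.
have inj : injective (fun x : F => x ^+ 2).
  move=> x y /= e; apply/eqP; rewrite -subr_eq0.
  have : (x - y) ^+ 2 = 0.
    have -> : (x - y) ^+ 2 = (x ^+ 2 - y ^+ 2) + 2%:R * (y ^+ 2 - x * y) by ring.
    by rewrite e h2 subrr mul0r addr0.
  by move/eqP; rewrite expf_eq0.
have [g _ gK] := injF_bij inj.
by exists (g z); rewrite (gK z).
Qed.


Lemma det_mul a b c d a' b' c' d' :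
  (a'*a + b'*c) * (c'*b + d'*d) - (a'*b + b'*d) * (c'*a + d'*c) = (a*d - b*c) * (a'*d' - b'*c').
Proof. ring. Qed.

Lemma partB (L : 'M[F]_(2,4)) : (2%:R : F) = 0 -> UnGamma L ->
  exists2 A : 'M[F]_4, inGq A & (L == ell0 F *m A)%MS.
Proof.
move=> h2 H; have [rk cd os] := H.
have [u0 S1] : exists u0, [set u | (cpt u <= L)%MS] = [set u0] by apply/cards1P/eqP.
have u0L : (cpt u0 <= L)%MS by have := set11 u0; rewrite -S1 inE.
pose x := (hc u0).1; pose y := (hc u0).2.
have D1 : y * y - (- x) * (1 - y) = 1 by rewrite /x /y; case: (u0) => [?|] /=; ring.
have hD1 : y * y - (- x) * (1 - y) != 0 by rewrite D1 oner_neq0.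
have [L1 L1def] : {L1 | L1 = L *m Mg y (- x) (1 - y) y} by exists (L *m Mg y (- x) (1 - y) y).
have H1 : UnGamma L1 by rewrite L1def; apply: UnGamma_Mg hD1 H.
have [rk1 cd1 os1] := H1.
have e3L1 : (cpt (Some 0) <= L1)%MS.
  have -> : cpt (Some 0) = cpt u0 *m Mg y (- x) (1 - y) y.
    by rewrite [cpt u0]cpt_mono mono_Mg /x /y; case: (u0) => [?|]; rv4'; ring.
  by rewrite L1def; apply: submxMr.
have uq u : (cpt u <= L1)%MS -> u = Some 0.
  have [w Sw] : exists w, [set u | (cpt u <= L1)%MS] = [set w] by apply/cards1P/eqP.
  have : Some 0 \in [set u | (cpt u <= L1)%MS] by rewrite inE.
  rewrite Sw inE => /eqP e0 hu.
  have : u \in [set u | (cpt u <= L1)%MS] by rewrite inE.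
  by rewrite Sw inE -e0 => /eqP.
pose vv (i : 'I_2) := row i L1 + (- row i L1 0 i3) *: cpt (Some (0:F)).
have vvL i : (vv i <= L1)%MS by rewrite addmx_sub ?row_sub ?scalemx_sub.
have vv3 i : vv i 0 i3 = 0 by rewrite /vv !mxE /=; ring.
have [v [vL v3 vnz]] : exists v : 'rV_4, [/\ (v <= L1)%MS, v 0 i3 = 0 & v != 0].
  have [i hi | h] := pickP (fun i : 'I_2 => vv i != 0).
    by exists (vv i).
  exfalso.
  have sL : (L1 <= cpt (Some 0))%MS.
    apply/row_subP => i; move/negbFE/eqP: (h i).
    move/(congr1 (fun w => w - (- row i L1 0 i3) *: cpt (Some (0:F)))).
    rewrite /vv addrK sub0r => ->.
    by rewrite -scaleNr scalemx_sub.
  have := leq_trans (mxrankS sL) (rank_leq_row _).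
  by rewrite (eqP rk1).
pose W := mk2 (cpt (Some 0)) v.
have rW : \rank W = 2 := rank_e3v v3 vnz.
have WL : (W <= L1)%MS by rewrite mk2_sub e3L1 vL.
have eW : (W == L1)%MS.
  by have := mxrank_leqif_eq WL; rewrite rW (eqP rk1) => -[_ <-].
have L1W : (L1 <= W)%MS by case/andP: eW.
have v0 : v 0 i0 != 0.
  apply/eqP => v00.
  have z : L1 *m (osc (Some 0))^T = 0.
    apply: (sub_mk2 L1W).
    - by apply/matrixP => i j; rewrite (ord1 i) (ord1 j) mulmx4E !mxE /=; ring.
    - by apply/matrixP => i j; rewrite (ord1 i) (ord1 j) mulmx4E !mxE /= v00 v3; ring.
  by move: (os1 (Some 0)); rewrite /line_in_plane z eqxx.
have hdel : v 0 i2 / v 0 i0 - (v 0 i1 / v 0 i0) ^+ 2 != 0.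
  apply/eqP => hd0.
  have hv2 : v 0 i2 = v 0 i1 ^+ 2 / v 0 i0.
    have : v 0 i2 = (v 0 i2 / v 0 i0 - (v 0 i1 / v 0 i0) ^+ 2) * v 0 i0 + v 0 i1 ^+ 2 / v 0 i0.
      by field.
    by rewrite hd0 mul0r add0r.
  case: (eqVneq (v 0 i1) 0) => v1.
  - have : (cpt None <= L1)%MS.
      have -> : cpt None = (v 0 i0)^-1 *: v.
        by rv4'; rewrite ?hv2 ?v1 ?v3; field.
      exact: scalemx_sub.
    by move/uq.
  - have : (cpt (Some (v 0 i0 / v 0 i1)) <= L1)%MS.
      have -> : cpt (Some (v 0 i0 / v 0 i1)) =
          ((v 0 i0 / v 0 i1)^+3 / v 0 i0) *: v + cpt (Some 0).
        by rv4'; rewrite ?hv2 ?v3; field; rewrite v0 v1.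
      by rewrite addmx_sub ?scalemx_sub.
    move/uq => [] /eqP; rewrite mulf_eq0 invr_eq0 (negbTE v0) (negbTE v1).
    by [].
have [dd hdd] := sqrt2 h2 (v 0 i2 / v 0 i0 - (v 0 i1 / v 0 i0) ^+ 2).
have dd0 : dd != 0 by apply: contraNneq hdel => d0; rewrite -hdd d0 expr0n.
pose cc := v 0 i1 / v 0 i0.
have eM : (ell0 F *m Mg 1 0 cc dd == L1)%MS.
  have sub : (ell0 F *m Mg 1 0 cc dd <= L1)%MS.
    rewrite ell0E mk2_mul mk2_sub; apply/andP; split.
    - have -> : cpt (Some 0) *m Mg 1 0 cc dd = dd^+3 *: cpt (Some 0).
        by rewrite cpt_mono mono_Mg; rv4'; ring.
      exact: scalemx_sub.
    - have -> : e1010 F *m Mg 1 0 cc dd =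
          (v 0 i0)^-1 *: v + (cc^+3 + 3%:R * cc * dd^+2) *: cpt (Some 0).
        by rv4'; rewrite ?v3 /cc ?hdd; field; rewrite ?v0.
      by rewrite addmx_sub ?scalemx_sub.
  have := mxrank_leqif_eq sub.
  rewrite mxrankMfree ?rank_ell0 ?(eqP rk1) ?row_free_unit ?Mg_unit //.
    by case=> _ <-.
  by rewrite mul1r mul0r subr0.
exists (Mg 1 0 cc dd *m Mg y (- - x) (- (1 - y)) y).
  rewrite Mg_mul; apply: Mg_inGq; rewrite det_mul mulf_neq0 //.
    by rewrite mul1r mul0r subr0.
  by rewrite (_ : y * y - - - x * - (1 - y) = y * y - (- x) * (1 - y)) //; ring.
rewrite mulmxA; apply/eqmxP; apply: eqmx_sym; apply: eqmx_trans (eqmxMr _ (eqmxP eM)) _.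
rewrite L1def -mulmxA Mg_inv D1 expr1n scale1r mulmx1.
exact: eqmx_refl.
Qed.
End S5.


Section S6.
Variable F : finFieldType.
Implicit Types (x y a b c d t k : F).

Lemma stab_scal a b c d : (2%:R : F) = 0 -> a*d - b*c != 0 ->
  (ell0 F *m Mg a b c d <= ell0 F)%MS -> exists s, Mg a b c d = s *: 1%:M.
Proof.
move=> h2 hD; rewrite {1}ell0E mk2_mul mk2_sub => /andP [s1 s2].
have [f1 f2] := sub_ell0 s1; have [g1 g2] := sub_ell0 s2.
rewrite cpt_mono mono_Mg !mxE /= in f1 f2.
rewrite !mulmx4E !mxE /= in g1 g2.
have f1' : b^+2 * d = 0 by rewrite -[RHS]f1; ring.
have f2' : b^+3 = b * d^+2.
  have e1 : b^+3 = (a*0+b*1)^+3 by ring.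
  have e2 : b * d^+2 = (a*0+b*1)*(c*0+d*1)^+2 by ring.
  by rewrite e1 e2.
have hb : b = 0.
  case: (eqVneq b 0) => // bn; exfalso.
  have d0 : d = 0.
    by move/eqP: f1'; rewrite mulf_eq0 expf_eq0 (negbTE bn) /= => /eqP.
  by move/eqP: f2'; rewrite d0 expr0n mulr0 expf_eq0 (negbTE bn).
rewrite hb in hD g1 g2 *.
have ha : a != 0 by apply: contraNneq hD => ->; rewrite mul0r mul0r subrr.
have hd : d != 0 by apply: contraNneq hD => ->; rewrite mulr0 mul0r subrr.
have hc : c = 0.
  have : a ^+ 2 * c = 0 by rewrite -[RHS]g1; ring.
  by move/eqP; rewrite mulf_eq0 expf_eq0 (negbTE ha) /= => /eqP.
rewrite hc in g2.
have had : a ^+ 2 = d ^+ 2.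
  have : a * (a ^+ 2 - d ^+ 2) = 0.
    move: g2; set E1 := (X in X = _); set E2 := (X in _ = X) => g2.
    have -> : a * (a ^+ 2 - d ^+ 2) = E1 - E2 by rewrite /E1 /E2; ring.
    by rewrite g2 subrr.
  by move/eqP; rewrite mulf_eq0 (negbTE ha) /= subr_eq0 => /eqP.
have ead : a = d.
  apply/eqP; rewrite -subr_eq0; have : (a - d) ^+ 2 = 0.
    rewrite (_ : (a - d) ^+ 2 = (a ^+ 2 - d ^+ 2) + 2%:R * (d ^+ 2 - a * d)); last by ring.
    by rewrite had h2 subrr mul0r addr0.
  by move/eqP; rewrite expf_eq0.
by exists (a ^+ 3); rewrite hc -ead Mg_scal.
Qed.


Lemma eqmx_scale2 m (X Y : 'M[F]_(m, 4)) p q : p != 0 -> q != 0 ->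
  (p *: X :=: q *: Y)%MS -> (X :=: Y)%MS.
Proof.
move=> p0 q0 e; apply: eqmx_trans (eqmx_sym (eqmx_scale X p0)) _.
exact: eqmx_trans e (eqmx_scale Y q0).
Qed.

Lemma partC (L : 'M[F]_(2,4)) (A : 'M[F]_4) : (7 <= #|F|)%N -> (2%:R : F) = 0 ->
  UnGamma L -> inGq A -> (L *m A == L)%MS -> exists c : F, A = c%:M.
Proof.
move=> hF h2 H hA h.
have [A0 hA0 eL] := partB h2 H.
have [a0 [b0 [c0 [d0 [k0 [hD0 k00 eA0]]]]]] := inGq_Mg hF hA0.
have [a [b [c [d [k [hD kn0 eA]]]]]] := inGq_Mg hF hA.
have t1 : (ell0 F *m A0 *m A :=: ell0 F *m A0)%MS.
  apply: eqmx_trans (eqmxMr _ (eqmx_sym (eqmxP eL))) _.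
  exact: eqmx_trans (eqmxP h) (eqmxP eL).
rewrite eA0 eA -!scalemxAr -scalemxAl scalerA in t1.
have t2 := eqmx_scale2 (mulf_neq0 kn0 k00) k00 t1.
have t3 := eqmxMr (Mg d0 (-b0) (-c0) a0) t2.
rewrite -!mulmxA Mg_inv -scalemxAr mulmx1 !mulmxA in t3.
have t4 : (ell0 F *m (Mg a0 b0 c0 d0 *m Mg a b c d *m Mg d0 (-b0) (-c0) a0) <= ell0 F)%MS.
  rewrite !mulmxA t3.
  by apply: scalemx_sub; apply: submx_refl.
rewrite !Mg_mul in t4.
have hs0 := fun hD => stab_scal h2 hD t4.
lazymatch type of hs0 with ?P -> _ => assert (hdet : P) end.
  rewrite !det_mul !mulf_neq0 //.
  by rewrite (_ : d0 * a0 - - b0 * - c0 = a0 * d0 - b0 * c0) //; ring.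
have [s hs] := hs0 hdet.
rewrite -!Mg_mul in hs.
set D0 := a0 * d0 - b0 * c0.
have eG : (D0 ^+ 3 * D0 ^+ 3) *: Mg a b c d = (s * D0 ^+ 3) *: 1%:M.
  have e1 : Mg d0 (-b0) (-c0) a0 *m (Mg a0 b0 c0 d0 *m Mg a b c d *m Mg d0 (-b0) (-c0) a0)
      *m Mg a0 b0 c0 d0 = (s * D0 ^+ 3) *: 1%:M.
    by rewrite hs -scalemxAr mulmx1 -scalemxAl Mg_inv' scalerA.
  rewrite -e1 !mulmxA Mg_inv' -scalemxAl mul1mx -mulmxA Mg_inv' -scalemxAr mulmx1.
  by rewrite scalerA.
exists (k * ((D0 ^+ 3 * D0 ^+ 3)^-1 * (s * D0 ^+ 3))).
rewrite eA -scalemx1 -scalerA; congr (_ *: _).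
rewrite -scalerA -eG scalerA mulVf ?scale1r //.
by rewrite mulf_neq0 // expf_neq0.
Qed.

End S6.

Theorem main (F' : finFieldType) (hq8 : (8 <= #|F'|)%N) (hqeven : ~~ odd #|F'|) :
  (forall L : 'M[F']_(2, 4),
      UnGamma L <-> exists2 A : 'M[F']_4, inGq A & (L == ell0 F' *m A)%MS)
  /\
  (forall L : 'M[F']_(2, 4), UnGamma L ->
      forall A : 'M[F']_4, inGq A -> (L *m A == L)%MS ->
      exists c : F', A = c%:M).
Proof.
have hF : (7 <= #|F'|)%N by apply: leq_trans hq8.
have h2 := char2 hqeven.
split.
- move=> L; split; first exact: partB.
  by case=> A hA e; apply: partA hF hA e.
- by move=> L H A hA e; exact: (partC hF h2 H hA e).
Qed.


Unset Implicit Arguments.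

Theorem theorem6p5 (F : finFieldType) (hq8 : (8 <= #|F|)%N) (hqeven : ~~ odd #|F|) :
  (forall L : 'M[F]_(2, 4),
      UnGamma L <-> exists2 A : 'M[F]_4, inGq A & (L == ell0 F *m A)%MS)
  /\
  (forall L : 'M[F]_(2, 4), UnGamma L ->
      forall A : 'M[F]_4, inGq A -> (L *m A == L)%MS ->
      exists c : F, A = c%:M).
Proof. exact: (main hq8 hqeven). Qed.
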